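(* For every $n\in\mathbb{N}$ and every $l\in\{0,1,\dots,8\}$ there is an outerplanar graph $G$ with $|V(G)|>n$, $|V_1(G)|=l$ and $\rho_G^4=3-\sigma_G^4$ that has no equitable $4$-coloring.
   Context: For a graph $G$, $V_1(G)$ is the set of vertices of degree $1$, and for $A\subseteq V(G)$, $\|G[A]\|$ is the number of edges of $G[A]$. Define $\rho_G^4(A)=4\|G[A]\|-5|A|+2|A\cap V_1(G)|$, $\rho_G^4=\max_{A\subseteq V(G)}\rho_G^4(A)$ (including $A=\emptyset$), and $\sigma_G^4=|V_1(G)|\bmod 2$. An equitable $4$-coloring is a proper vertex coloring with $4$ colors in which the sizes of any two color classes differ by at most $1$. *)

(* Defs.v *)
From mathcomp Require Import all_boot all_order all_algebra.
Set Implicit Arguments. Unset Strict Implicit. Unset Printing Implicit Defensive.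
Import Order.TTheory GRing.Theory Num.Theory.

Definition simple_graph (T : finType) (e : rel T) : Prop :=
  (forall x y, e x y = e y x) /\ (forall x, ~~ e x x).

(* Outerplanar: the vertices can be placed in convex position (on a circle),
   in some cyclic order given by an injective position map f, so that the
   edges, drawn as chords, do not cross. *)
Definition outerplanar (T : finType) (e : rel T) : Prop :=
  exists f : T -> nat, injective f /\
    forall a b c d, e a b -> e c d ->
      ~ [/\ (f a < f c)%N, (f c < f b)%N & (f b < f d)%N].

Definition degree (T : finType) (e : rel T) (v : T) : nat := #|[set u | e v u]|.

Definition V1 (T : finType) (e : rel T) : {set T} := [set v | degree e v == 1%N].

Definition nedges_in (T : finType) (e : rel T) (A : {set T}) : nat :=
  #|[set E : {set T} | [exists x in A, exists y in A, e x y && (E == [set x; y])]]|.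

Local Open Scope ring_scope.

Definition rho4A (T : finType) (e : rel T) (A : {set T}) : int :=
  4%:Z * (nedges_in e A)%:Z - 5%:Z * #|A|%:Z + 2%:Z * #|A :&: V1 e|%:Z.

(* rho^4_G = max over all A (including the empty set, whose value is 0,
   so starting the max at 0 does not change it). *)
Definition rho4 (T : finType) (e : rel T) : int :=
  \big[Num.max/0]_(A : {set T}) rho4A e A.

Definition sigma4 (T : finType) (e : rel T) : nat := (#|V1 e| %% 2)%N.

Definition equitable_4coloring (T : finType) (e : rel T) (c : T -> 'I_4) : Prop :=
  (forall x y, e x y -> c x != c y) /\
  (forall i j : 'I_4, (#|[set x | c x == i]| <= #|[set x | c x == j]| + 1)%N).

(* Main.v *)
Require Import Defs.
From mathcomp Require Import all_boot all_order all_algebra.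
From mathcomp Require Import zify ring.
Set Implicit Arguments. Unset Strict Implicit. Unset Printing Implicit Defensive.
Import Order.TTheory GRing.Theory Num.Theory.

Definition Ed (a l x y : nat) : bool :=
  (x < y) && [|| (x == 0) && (y < (2*a+l).+1),
     (x == 0) && ((2*a+l).+1 <= y) && (((y - (2*a+l).+1) %% 4 == 0) || ((y - (2*a+l).+1) %% 4 == 3)),
     (y == x.+1) && (0 < x) && (y <= 2*a) && (y %% 2 == 0) |
     (y == x.+1) && ((2*a+l).+1 < y) && ((y - (2*a+l).+1) %% 4 != 0)].

Definition GG (a l t : nat) : rel 'I_(2*a+l+4*t).+1 :=
  fun x y => Ed a l x y || Ed a l y x.

Arguments GG : clear implicits.

Lemma GG_simple a l t : simple_graph (GG a l t).
Proof.
split.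
- by move=> x y; rewrite /GG orbC.
- move=> x; rewrite /GG /Ed; lia.
Qed.

Lemma GG_outer a l t : outerplanar (GG a l t).
Proof.
exists (fun x => nat_of_ord x); split; first exact: val_inj.
move=> x y z w; rewrite /GG /Ed => H1 H2 [H3 H4 H5]. lia.
Qed.

Lemma EtA a l i : i < a -> [/\ Ed a l 0 (2*i).+1 = true, (1 < (2*i).+1) && Ed a l (2*i) (2*i).+1 = false & Ed a l (2*i).+1 (2*i).+2 = true].
Proof. move=> H; rewrite /Ed; split; lia. Qed.
Lemma EtB a l i : i < a -> [/\ Ed a l 0 (2*i).+2 = true, Ed a l (2*i).+1 (2*i).+2 = true & Ed a l (2*i).+2 (2*i).+3 = false].
Proof. move=> H; rewrite /Ed; split; lia. Qed.
Lemma EL a l j : j < l -> [/\ Ed a l 0 (2*a+j).+1 = true, (1 < (2*a+j).+1) && Ed a l (2*a+j) (2*a+j).+1 = false & Ed a l (2*a+j).+1 (2*a+j).+2 = false].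
Proof. move=> H; rewrite /Ed; split; lia. Qed.
Lemma EP0 a l i : [/\ Ed a l 0 ((2*a+l).+1 + 4*i) = true, (1 < (2*a+l).+1 + 4*i) && Ed a l ((2*a+l).+1 + 4*i).-1 ((2*a+l).+1 + 4*i) = false & Ed a l ((2*a+l).+1 + 4*i) ((2*a+l).+1 + 4*i).+1 = true].
Proof. rewrite /Ed; split; lia. Qed.
Lemma EP1 a l i : [/\ Ed a l 0 ((2*a+l).+1 + 4*i).+1 = false, Ed a l ((2*a+l).+1 + 4*i) ((2*a+l).+1 + 4*i).+1 = true & Ed a l ((2*a+l).+1 + 4*i).+1 ((2*a+l).+1 + 4*i).+2 = true].
Proof. rewrite /Ed; split; lia. Qed.
Lemma EP2 a l i : [/\ Ed a l 0 ((2*a+l).+1 + 4*i).+2 = false, Ed a l ((2*a+l).+1 + 4*i).+1 ((2*a+l).+1 + 4*i).+2 = true & Ed a l ((2*a+l).+1 + 4*i).+2 ((2*a+l).+1 + 4*i).+3 = true].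
Proof. rewrite /Ed; split; lia. Qed.
Lemma EP3 a l i : [/\ Ed a l 0 ((2*a+l).+1 + 4*i).+3 = true, Ed a l ((2*a+l).+1 + 4*i).+2 ((2*a+l).+1 + 4*i).+3 = true & Ed a l ((2*a+l).+1 + 4*i).+3 ((2*a+l).+1 + 4*i).+4 = false].
Proof. rewrite /Ed; split; lia. Qed.

Lemma classify a l t k : k < (2*a+l+4*t).+1 ->
  [\/ k = 0,
      exists2 i, i < a & (k = (2*i).+1 \/ k = (2*i).+2),
      exists2 j, j < l & k = (2*a+j).+1 |
      exists2 i, i < t & [\/ k = (2*a+l).+1 + 4*i, k = ((2*a+l).+1 + 4*i).+1,
                            k = ((2*a+l).+1 + 4*i).+2 | k = ((2*a+l).+1 + 4*i).+3]].
Proof.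
move=> Hk.
case: (posnP k) => [->|Hk0]; first by apply: Or41.
case: (leqP k (2*a)) => Hka.
  apply: Or42; exists ((k.-1) %/ 2); first lia.
  case: (boolP (k %% 2 == 1)) => Ho; [left|right]; lia.
case: (ltnP k (2*a+l).+1) => HkK.
  by apply: Or43; exists (k - (2*a).+1); lia.
apply: Or44; exists ((k - (2*a+l).+1) %/ 4); first lia.
have : (k - (2*a+l).+1) %% 4 < 4 by rewrite ltn_mod.
case: ((k - (2*a+l).+1) %% 4) (divn_eq (k - (2*a+l).+1) 4) => [|[|[|[|r]]]] Hd _ //;
  [apply: Or41 | apply: Or42 | apply: Or43 | apply: Or44]; lia.
Qed.

Lemma two_nb (T : finType) (e : rel T) k u w :
  u != w -> e k u -> e k w -> 1 < #|[set z | e k z]|.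
Proof.
move=> Huw Hu Hw.
have : [set u; w] \subset [set z | e k z].
  by apply/subsetP => z; rewrite !inE => /orP[/eqP->|/eqP->].
by move/subset_leq_card; rewrite cards2 Huw.
Qed.

Lemma two_nbN a l t (k : 'I_(2*a+l+4*t).+1) u w :
  u < (2*a+l+4*t).+1 -> w < (2*a+l+4*t).+1 -> u != w ->
  Ed a l k u || Ed a l u k -> Ed a l k w || Ed a l w k ->
  1 < #|[set z | GG a l t k z]|.
Proof.
move=> Hu Hw Huw H1 H2.
apply: (@two_nb _ _ _ (inord u) (inord w)).
- by apply/negP => /eqP /(congr1 val); rewrite /= !inordK //; apply/eqP.
- by rewrite /GG inordK.
- by rewrite /GG inordK.
Qed.

Lemma V1_GG a l t : 2 <= 2*a+l ->
  V1 (GG a l t) = [set k : 'I_(2*a+l+4*t).+1 | (2*a < k) && (k < (2*a+l).+1)].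
Proof.
move=> H2; apply/setP => k; rewrite !inE /degree.
have Hk := ltn_ord k.
case: (boolP ((2*a < k) && (k < (2*a+l).+1))) => Hl.
- suff -> : [set z | GG a l t k z] = [set inord 0] by rewrite cards1.
  apply/setP => z; rewrite !inE; have Hz := ltn_ord z.
  apply/idP/eqP => [Hkz|->].
  + apply/val_inj; rewrite /= inordK //. move: Hkz; rewrite /GG /Ed; lia.
  + rewrite /GG inordK //. rewrite /Ed; lia.
- apply/negP => /eqP H1.
  suff : 1 < #|[set z | GG a l t k z]| by rewrite H1.
  have [Hk0|[i Hi [Hki|Hki]]|[j Hj Hkj]|[i Hi Hki]] := classify Hk.
  + apply: (@two_nbN _ _ _ _ 1 2) => //; rewrite ?Hk0 /Ed; lia.
  + have [E1 E2 E3] := EtA l Hi.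
    apply: (@two_nbN _ _ _ _ 0 k.+1); rewrite ?Hki ?E1 ?E3 ?orbT //; clear -Hk Hki Hi; lia.
  + have [E1 E2 E3] := EtB l Hi.
    apply: (@two_nbN _ _ _ _ 0 k.-1); rewrite ?Hki ?E1 ?E2 ?orbT //; clear -Hk Hki Hi; lia.
  + by move: Hl; rewrite Hkj; lia.
  + have [E1 E2 E3] := EP0 a l i; have [F1 F2 F3] := EP1 a l i;
    have [G1 G2 G3] := EP2 a l i; have [H1' H2' H3'] := EP3 a l i.
    case: Hki => Hk'.
    * apply: (@two_nbN _ _ _ _ 0 ((2*a+l).+1 + 4*i).+1); rewrite ?Hk' ?E1 ?E3 ?orbT //; clear -Hk Hk' Hi; lia.
    * apply: (@two_nbN _ _ _ _ ((2*a+l).+1 + 4*i) ((2*a+l).+1 + 4*i).+2); rewrite ?Hk' ?F2 ?F3 ?orbT //; clear -Hk Hk' Hi; lia.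
    * apply: (@two_nbN _ _ _ _ ((2*a+l).+1 + 4*i).+1 ((2*a+l).+1 + 4*i).+3); rewrite ?Hk' ?G2 ?G3 ?orbT //; clear -Hk Hk' Hi; lia.
    * apply: (@two_nbN _ _ _ _ 0 ((2*a+l).+1 + 4*i).+2); rewrite ?Hk' ?H1' ?H2' ?orbT //; clear -Hk Hk' Hi; lia.
Qed.

Lemma card_sum (T : finType) (S : {pred T}) : #|S| = \sum_(x : T) (x \in S : nat).
Proof. by rewrite -sum1_card big_mkcond /=; apply: eq_bigr => x _; case: (x \in S). Qed.

Lemma inj2 N (x1 y1 x2 y2 : 'I_N) : x1 < y1 -> x2 < y2 -> [set x1; y1] = [set x2; y2] -> (x1, y1) = (x2, y2).
Proof.
move=> l1 l2 E.
have h1 : x1 \in [set x2; y2] by rewrite -E !inE eqxx.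
have h2 : y1 \in [set x2; y2] by rewrite -E !inE eqxx orbT.
have h3 : x2 \in [set x1; y1] by rewrite E !inE eqxx.
move: h1 h2 h3; rewrite !inE => h1 h2 h3.
have ex : x1 = x2.
  case/orP: h1 => /eqP // e1. exfalso. case/orP: h3 => /eqP e3.
  - by move: l2; rewrite e3 e1 ltnn.
  - by move: l2; rewrite e3 -e1 => l2; move: (ltn_trans l1 l2); rewrite ltnn.
case/orP: h2 => /eqP e2; first by move: l1; rewrite e2 -ex ltnn.
by rewrite ex e2.
Qed.

Lemma nedges_sum N (e : rel 'I_N) (A : {set 'I_N}) :
  (forall x y, e x y = e y x) -> (forall x, ~~ e x x) ->
  nedges_in e A = \sum_(y in A) #|[set x in A | (x < y) && e x y]|.
Proof.
move=> Hs Hi.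
pose P := [set p : 'I_N * 'I_N | [&& p.1 \in A, p.2 \in A, p.1 < p.2 & e p.1 p.2]].
have HP : [set E : {set 'I_N} | [exists x in A, exists y in A, e x y && (E == [set x; y])]]
          = (fun p => [set p.1; p.2]) @: P.
  apply/setP => E; rewrite inE; apply/idP/imsetP.
  - case/exists_inP => x xA /exists_inP [y yA /andP [exy /eqP ->]].
    case: (ltngtP x y) => H.
    + exists (x, y); last by [].
      by rewrite inE /=; apply/and4P; split.
    + exists (y, x); last by rewrite setUC.
      by rewrite inE /=; apply/and4P; split; rewrite // Hs.
    + have Exy : x = y by apply: val_inj.
      by move: exy; rewrite Exy (negbTE (Hi y)).
  - case=> [[x y]]; rewrite inE /= => /and4P [xA yA _ exy] ->.
    apply/exists_inP; exists x => //; apply/exists_inP; exists y => //.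
    by rewrite exy eqxx.
rewrite /nedges_in HP card_in_imset; last first.
  move=> [x1 y1] [x2 y2]; rewrite !inE /= => /and4P [_ _ l1 _] /and4P [_ _ l2 _] E.
  exact: inj2.
rewrite card_sum (eq_bigr (fun p => ((p.1, p.2) \in P : nat))); last by case.
rewrite -(pair_bigA _ (fun x y => ((x, y) \in P : nat))) /= exchange_big /=.
rewrite [RHS]big_mkcond /=; apply: eq_bigr => y _.
case: (boolP (y \in A)) => yA.
- rewrite card_sum; apply: eq_bigr => x _; by rewrite !inE /= yA.
- by apply: big1 => x _; rewrite inE /= (negbTE yA) andbF.
Qed.

Local Open Scope ring_scope.
Lemma Posz_sum (I : finType) (P : pred I) (F : I -> nat) :
  ((\sum_(i | P i) F i)%N)%:Z = \sum_(i | P i) (F i)%:Z.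
Proof. exact: (big_morph Posz PoszD (erefl _)). Qed.


Lemma sumrc (I : finType) (P : pred I) (c : int) :
  \sum_(i | P i) c = c * (#|P|)%:Z.
Proof. by rewrite sumr_const -mulr_natr natz. Qed.

Lemma rho4A_sum N (e : rel 'I_N) (A : {set 'I_N}) :
  (forall x y, e x y = e y x) -> (forall x, ~~ e x x) ->
  rho4A e A = \sum_(y : 'I_N) (if y \in A then
      4%:Z * (#|[set x in A | ((x < y)%N) && e x y]|)%:Z - 5 + 2 * ((y \in V1 e : nat))%:Z else 0).
Proof.
move=> Hs Hi.
rewrite /rho4A nedges_sum // -big_mkcond /=.
have -> : #|A| = (\sum_(y in A) 1)%N by rewrite sum1_card.
have -> : #|A :&: V1 e| = (\sum_(y in A) (y \in V1 e : nat))%N.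
  by rewrite card_sum [RHS]big_mkcond /=; apply: eq_bigr => y _; rewrite inE; case: (y \in A).
rewrite !Posz_sum big_split big_split /= -!mulr_sumr !sumrc.
ring.
Qed.

Local Close Scope ring_scope.

Lemma card_sumS (T : finType) (S : {set T}) : #|S| = \sum_(x : T) (x \in S : nat).
Proof. by rewrite -sum1_card big_mkcond /=; apply: eq_bigr => x _; case: (x \in S). Qed.

Lemma Ed_lt a l x y : Ed a l x y -> x < y.
Proof. by case/andP. Qed.

Lemma Ed_gt a l x y : y <= x -> Ed a l x y = false.
Proof. by move=> H; apply/negP => /Ed_lt; rewrite ltnNge H. Qed.

Lemma back_GG a l t (A : {set 'I_(2*a+l+4*t).+1}) (y : 'I_(2*a+l+4*t).+1) :
  #|[set x in A | (x < y) && GG a l t x y]| =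
  (((inord 0 \in A) && Ed a l 0 y) : nat) + (((1 < y) && Ed a l y.-1 y && (inord y.-1 \in A)) : nat).
Proof.
have Hy := ltn_ord y.
have Hz : forall x : 'I_(2*a+l+4*t).+1, x != inord 0 -> x != inord y.-1 ->
    (x \in [set x in A | (x < y) && GG a l t x y]) = false.
  move=> x H0 H1; rewrite !inE.
  have Hx := ltn_ord x.
  have H0' : nat_of_ord x != 0 by apply: contra H0 => /eqP E; apply/eqP/val_inj; rewrite /= inordK.
  have H1' : nat_of_ord x != y.-1 by apply: contra H1 => /eqP E; apply/eqP/val_inj; rewrite /= inordK //; lia.
  case: (x \in A) => //=. rewrite /GG /Ed. clear -H0' H1'. lia.
have E0 : (inord 0 \in [set x in A | (x < y) && GG a l t x y]) = (inord 0 \in A) && Ed a l 0 y.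
  rewrite !inE /GG inordK // (@Ed_gt _ _ y 0) // orbF.
  by case: (inord 0 \in A); case E: (Ed a l 0 y); rewrite ?andbF //= (Ed_lt E).
rewrite (card_sumS [set x in A | (x < y) && GG a l t x y]) (bigD1 (inord 0)) //= E0.
case: (ltnP 1 y) => H1; last first.
  rewrite /= addn0 big1 ?addn0 //= => x Hx0.
  case: (eqVneq x (inord y.-1)) => [Ex|Hx1]; last by rewrite Hz.
  move: Hx0; rewrite Ex.
  have -> : y.-1 = 0 by lia.
  by rewrite eqxx.
have Hne : inord y.-1 != inord 0 :> 'I_(2*a+l+4*t).+1.
  by apply/eqP => /(congr1 val); rewrite /= !inordK //; lia.
rewrite (bigD1 (inord y.-1)) /=; last by rewrite Hne.
rewrite big1 ?addn0 /=; last by move=> x /andP [Ha Hb]; rewrite Hz.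
congr (_ + _).
rewrite !inE /GG inordK; last by lia.
rewrite (@Ed_gt _ _ y y.-1); last by lia.
rewrite orbF; case: (inord y.-1 \in A); rewrite ?andbF ?andbT //=.
by have -> : y.-1 < y by lia.
Qed.

Local Open Scope ring_scope.

Definition leafb a l k := ((2*a < k) && (k < (2*a+l).+1))%N.

Definition FF a l (s : nat -> bool) (k : nat) : int :=
  if s k then 4%:Z * ((((s 0%N && Ed a l 0 k) : nat) + (((1 < k)%N && Ed a l k.-1 k && s k.-1) : nat))%N)%:Z
              - 5 + 2 * ((leafb a l k : nat))%:Z else 0.

Lemma rho_GG a l t (A : {set 'I_(2*a+l+4*t).+1}) : (2 <= 2*a+l)%N ->
  rho4A (GG a l t) A = \sum_(0 <= k < (2*a+l+4*t).+1) FF a l (fun k => inord k \in A) k.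
Proof.
move=> H2.
have [Hs Hi] := GG_simple a l t.
rewrite rho4A_sum // big_mkord; apply: eq_bigr => y _.
by rewrite back_GG V1_GG // inE /FF inord_val.
Qed.

Local Close Scope ring_scope.

Definition bz (b : bool) : int := Posz (b : nat).

Definition triE (b0 b1 b2 : bool) : int :=
  ((if b1 then 4 * bz b0 - 5 else 0) + (if b2 then 4 * (bz b0 + bz b1) - 5 else 0))%R.
Definition leafE (b0 b1 : bool) : int := (if b1 then 4 * bz b0 - 3 else 0)%R.
Definition pentE (b0 b1 b2 b3 b4 : bool) : int :=
  ((if b1 then 4 * bz b0 - 5 else 0) + (if b2 then 4 * bz b1 - 5 else 0) +
  (if b3 then 4 * bz b2 - 5 else 0) + (if b4 then 4 * (bz b0 + bz b3) - 5 else 0))%R.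

Lemma FF0 a l s : FF a l s 0 = (if s 0%N then -5 else 0)%R.
Proof. by rewrite /FF Ed_gt //; case: (s 0%N). Qed.

Lemma FFtri a l s i : (i < a)%N ->
  (FF a l s ((2*i).+1)%N + FF a l s ((2*i).+2)%N)%R = triE (s 0%N) (s ((2*i).+1)%N) (s ((2*i).+2)%N).
Proof.
move=> Hi; have [E1 E2 E3] := EtA l Hi; have [F1 F2 F3] := EtB l Hi.
rewrite /FF E1 E2 F1 F2.
have -> : leafb a l (2*i).+1 = false by rewrite /leafb; lia.
have -> : leafb a l (2*i).+2 = false by rewrite /leafb; lia.
have -> : (1 < (2*i).+2)%N = true by lia.
by rewrite /triE /bz /=; case: (s 0%N); case: (s ((2*i).+1)%N); case: (s ((2*i).+2)%N).
Qed.

Lemma FFleaf a l s j : (j < l)%N ->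
  FF a l s ((2*a+j).+1)%N = leafE (s 0%N) (s ((2*a+j).+1)%N).
Proof.
move=> Hj; have [E1 E2 E3] := EL a Hj.
rewrite /FF E1 E2.
have -> : leafb a l (2*a+j).+1 = true by rewrite /leafb; lia.
by rewrite /leafE /bz /=; case: (s 0%N); case: (s ((2*a+j).+1)%N).
Qed.

Lemma FFpent a l s i :
  let m := ((2*a+l).+1 + 4*i)%N in
  (FF a l s m + FF a l s m.+1 + FF a l s m.+2 + FF a l s m.+3)%R =
  pentE (s 0%N) (s m) (s m.+1) (s m.+2) (s m.+3).
Proof.
move=> m.
have [E1 E2 E3] := EP0 a l i; have [F1 F2 F3] := EP1 a l i;
have [G1 G2 G3] := EP2 a l i; have [H1 H2 H3] := EP3 a l i.
rewrite /FF /m E1 E2 F1 F2 G1 G2 H1 H2 /=.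
have -> : leafb a l ((2*a+l).+1 + 4*i) = false by rewrite /leafb; lia.
have -> : leafb a l ((2*a+l).+1 + 4*i).+1 = false by rewrite /leafb; lia.
have -> : leafb a l ((2*a+l).+1 + 4*i).+2 = false by rewrite /leafb; lia.
have -> : leafb a l ((2*a+l).+1 + 4*i).+3 = false by rewrite /leafb; lia.
rewrite /pentE /bz /=.
by case: (s 0%N); case: (s ((2*a+l).+1 + 4*i)%N); case: (s (((2*a+l).+1 + 4*i).+1)%N);
  case: (s (((2*a+l).+1 + 4*i).+2)%N); case: (s (((2*a+l).+1 + 4*i).+3)%N).
Qed.

Lemma sum_tri a l s i : (i <= a)%N ->
  (\sum_(1 <= k < ((2*i).+1)%N) FF a l s k)%R = (\sum_(j < i) triE (s 0%N) (s ((2*j).+1)%N) (s ((2*j).+2)%N))%R.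
Proof.
elim: i => [|i IH] Hi; first by rewrite big_geq // big_ord0.
have -> : (2 * i.+1).+1 = ((2*i).+2).+1 by lia.
rewrite big_nat_recr /=; last by lia.
rewrite big_nat_recr /=; last by lia.
rewrite big_ord_recr /= IH; last by lia.
by rewrite -(@FFtri a l s i) // addrA.
Qed.

Lemma sum_leaf a l s j : (j <= l)%N ->
  (\sum_(((2*a).+1)%N <= k < ((2*a+j).+1)%N) FF a l s k = \sum_(r < j) leafE (s 0%N) (s ((2*a+r).+1)%N))%R.
Proof.
elim: j => [|j IH] Hj; first by rewrite addn0 big_geq // big_ord0.
have -> : (2 * a + j.+1).+1 = (2*a+j).+2 by lia.
rewrite big_nat_recr /=; last by lia.
rewrite big_ord_recr /= IH; last by lia.
by rewrite -(@FFleaf a l s j).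
Qed.

Lemma sum_pent a l s i :
  (\sum_(((2*a+l).+1)%N <= k < ((2*a+l).+1 + 4*i)%N) FF a l s k)%R = (
  \sum_(r < i) pentE (s 0%N) (s ((2*a+l).+1 + 4*r)%N) (s (((2*a+l).+1 + 4*r).+1)%N)
        (s (((2*a+l).+1 + 4*r).+2)%N) (s (((2*a+l).+1 + 4*r).+3)%N))%R.
Proof.
elim: i => [|i IH]; first by rewrite muln0 addn0 big_geq // big_ord0.
have -> : ((2*a+l).+1 + 4 * i.+1) = ((2*a+l).+1 + 4*i).+3.+1 by lia.
rewrite big_nat_recr /=; last by lia.
rewrite big_nat_recr /=; last by lia.
rewrite big_nat_recr /=; last by lia.
rewrite big_nat_recr /=; last by lia.
rewrite big_ord_recr /= IH.
by rewrite -(@FFpent a l s i) /= !addrA.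
Qed.


Lemma sum_all a l t s :
  (\sum_(0 <= k < ((2*a+l+4*t).+1)%N) FF a l s k =
  (if s 0%N then -5 else 0) + \sum_(j < a) triE (s 0%N) (s ((2*j).+1)%N) (s ((2*j).+2)%N)
  + \sum_(r < l) leafE (s 0%N) (s ((2*a+r).+1)%N)
  + \sum_(r < t) pentE (s 0%N) (s ((2*a+l).+1 + 4*r)%N) (s (((2*a+l).+1 + 4*r).+1)%N)
        (s (((2*a+l).+1 + 4*r).+2)%N) (s (((2*a+l).+1 + 4*r).+3)%N))%R.
Proof.
rewrite (@big_cat_nat _ _ _ 1) //=.
rewrite big_nat1 FF0.
rewrite (@big_cat_nat _ _ _ ((2*a).+1)) //=; last by lia.
rewrite (@big_cat_nat _ _ _ ((2*a+l).+1) ((2*a).+1)) //=; [|lia|lia].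
rewrite (@sum_tri a l s a) // (@sum_leaf a l s l) //.
have -> : (2*a+l+4*t).+1 = ((2*a+l).+1 + 4*t)%N by lia.
by rewrite sum_pent !addrA.
Qed.

Lemma FF_le a l t s : (5 <= 2*a+l)%N ->
  (\sum_(0 <= k < ((2*a+l+4*t).+1)%N) FF a l s k <= Posz (2*a+l) - 5)%R.
Proof.
move=> H5; rewrite sum_all.
have Hp : (\sum_(r < t) pentE (s 0%N) (s ((2*a+l).+1 + 4*r)%N) (s (((2*a+l).+1 + 4*r).+1)%N)
        (s (((2*a+l).+1 + 4*r).+2)%N) (s (((2*a+l).+1 + 4*r).+3)%N) <= \sum_(r < t) (0:int))%R.
  apply: ler_sum => r _; rewrite /pentE /bz.
  by case: (s 0%N); case: (s ((2*a+l).+1 + 4*r)%N); case: (s (((2*a+l).+1 + 4*r).+1)%N);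
    case: (s (((2*a+l).+1 + 4*r).+2)%N); case: (s (((2*a+l).+1 + 4*r).+3)%N).
rewrite big1_eq in Hp.
have Ht : (\sum_(j < a) triE (s 0%N) (s ((2*j).+1)%N) (s ((2*j).+2)%N) <= \sum_(j < a) (if s 0%N then 2 else 0 : int))%R.
  apply: ler_sum => j _; rewrite /triE /bz.
  by case: (s 0%N); case: (s ((2*j).+1)%N); case: (s ((2*j).+2)%N).
have Hl : (\sum_(r < l) leafE (s 0%N) (s ((2*a+r).+1)%N) <= \sum_(r < l) (if s 0%N then 1 else 0 : int))%R.
  apply: ler_sum => j _; rewrite /leafE /bz.
  by case: (s 0%N); case: (s ((2*a+j).+1)%N).
rewrite !sumrc !card_ord in Ht Hl.
move: Hp Ht Hl; case: (s 0%N); lia.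
Qed.


Lemma rho_le a l t (A : {set 'I_(2*a+l+4*t).+1}) : (5 <= 2*a+l)%N ->
  (rho4A (GG a l t) A <= Posz (2*a+l) - 5)%R.
Proof. by move=> H5; rewrite rho_GG; [apply: FF_le | lia]. Qed.

Lemma FF_ext a l (s1 s2 : nat -> bool) k : s1 =1 s2 -> FF a l s1 k = FF a l s2 k.
Proof. by move=> H; rewrite /FF !H. Qed.

Lemma rho_T a l t : (5 <= 2*a+l)%N ->
  rho4A (GG a l t) [set: 'I_(2*a+l+4*t).+1] = (Posz (2*a+l) - 5)%R.
Proof.
move=> H5; rewrite rho_GG; last by lia.
rewrite (eq_bigr (fun k => FF a l (fun _ => true) k)); last by move=> k _; apply: FF_ext => x; rewrite in_setT.
rewrite sum_all /= !sumrc !card_ord /triE /leafE /pentE /bz /=.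
lia.
Qed.

Lemma Ed0_not a l y : y != 0 -> ~~ Ed a l 0 y ->
  (2*a+l).+1 <= y /\ ((y - (2*a+l).+1) %% 4 = 1 \/ (y - (2*a+l).+1) %% 4 = 2).
Proof. rewrite /Ed. lia. Qed.
Lemma pent_inj a l y1 y2 : y1 != 0 -> y2 != 0 -> ~~ Ed a l 0 y1 -> ~~ Ed a l 0 y2 ->
  (y1 - (2*a+l).+1) %/ 4 = (y2 - (2*a+l).+1) %/ 4 -> y1 != y2 -> Ed a l y1 y2 || Ed a l y2 y1.
Proof.
move=> H1 H2 /(Ed0_not H1) [K1 M1] /(Ed0_not H2) [K2 M2] Hq Hne.
have [q Hq'] : exists q, q = (y1 - (2*a+l).+1) %/ 4 by exists ((y1 - (2*a+l).+1) %/ 4).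
have [F1 F2 F3] := EP1 a l q.
have : (y1 = ((2*a+l).+1 + 4 * q).+1 /\ y2 = ((2*a+l).+1 + 4 * q).+2) \/
       (y2 = ((2*a+l).+1 + 4 * q).+1 /\ y1 = ((2*a+l).+1 + 4 * q).+2).
  clear F1 F2 F3; lia.
clear Hq'.
by case=> [[-> ->]|[-> ->]]; rewrite F3 ?orbT.
Qed.

Lemma sum_classes (T : finType) (c : T -> 'I_4) :
  \sum_(j : 'I_4) #|[set x | c x == j]| = #|T|.
Proof.
rewrite (eq_bigr (fun j => \sum_(x : T) (c x == j : nat))); last first.
  by move=> j _; rewrite card_sumS; apply: eq_bigr => x _; rewrite inE.
rewrite exchange_big /= -sum1_card; apply: eq_bigr => x _.
rewrite (bigD1 (c x)) //= eqxx big1 // => j /negbTE; by rewrite eq_sym => ->.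
Qed.

Lemma no_eq a l t : (7 <= 2*a+l)%N ->
  ~ (exists c : 'I_(2*a+l+4*t.+1).+1 -> 'I_4, equitable_4coloring (GG a l t.+1) c).
Proof.
move=> H7 [c [Hp Heq]].
pose v : 'I_(2*a+l+4*t.+1).+1 := inord 0.
have Hv : nat_of_ord v = 0 by rewrite inordK.
pose Cv := [set x | c x == c v].
pose f := fun y : 'I_(2*a+l+4*t.+1).+1 => (inord ((y - (2*a+l).+1) %/ 4) : 'I_t.+1).
have Hnv : forall y, y \in Cv -> y != v -> ~~ Ed a l 0 y.
  move=> y; rewrite inE => /eqP Hc Hy; apply/negP => He.
  by have := Hp v y; rewrite /GG Hv He Hc eqxx => /(_ isT).
have Hinj : {in Cv :\ v &, injective f}.
  move=> y1 y2; rewrite !inE => /andP [H1v H1c] /andP [H2v H2c] Hf.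
  have E1 : ~~ Ed a l 0 y1 by apply: (Hnv y1) => //; rewrite inE.
  have E2 : ~~ Ed a l 0 y2 by apply: (Hnv y2) => //; rewrite inE.
  have Hy1 := ltn_ord y1; have Hy2 := ltn_ord y2.
  have H1' : nat_of_ord y1 != 0 by apply: contra H1v => /eqP E; apply/eqP/val_inj; rewrite /= E.
  have H2' : nat_of_ord y2 != 0 by apply: contra H2v => /eqP E; apply/eqP/val_inj; rewrite /= E.
  have Hf' : ((y1 - (2*a+l).+1) %/ 4 = (y2 - (2*a+l).+1) %/ 4)%N.
    by move/(congr1 val): Hf; rewrite /= !inordK //; lia.
  case: (eqVneq y1 y2) => // Hne; exfalso.
  have Hne' : nat_of_ord y1 != nat_of_ord y2 by [].
  have Hg : ~~ GG a l t.+1 y1 y2.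
    by apply/negP => /Hp; rewrite (eqP H1c) (eqP H2c) eqxx.
  by move: Hg; rewrite /GG (pent_inj H1' H2' E1 E2 Hf' Hne').
have Hcv : #|Cv| <= t.+2.
  rewrite (cardsD1 v) -(card_in_imset Hinj).
  have := max_card [set f x | x in Cv :\ v]; rewrite card_ord.
  by move=> h; apply: (leq_add (leq_b1 _) h).
have Hsum := sum_classes c.
rewrite card_ord (bigD1 (c v)) //= in Hsum.
have Hrest : \sum_(j < 4 | j != c v) #|[set x | c x == j]| <= \sum_(j < 4 | j != c v) #|Cv|.+1.
  by apply: leq_sum => j _; rewrite (leq_trans (Heq j (c v))) // addn1.
rewrite sum_nat_const cardC1 card_ord in Hrest.
rewrite -/Cv in Hsum.
move: Hrest; rewrite [4.-1]/= => Hrest.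
set S1 := \sum_(j < 4 | j != c v) _ in Hrest.
set S2 := \sum_(i < 4 | i != c v) _ in Hsum.
have E12 : S2 = S1 by [].
rewrite E12 in Hsum.
have Hsum2 : #|Cv| + S1 = (2*a+l+4*t.+1).+1 := Hsum.
clear -Hrest Hsum2 Hcv H7; clearbody S1; move: Hrest Hsum2 Hcv; generalize #|Cv|; move=> n1 h1 h2 h3; lia.
Qed.

Lemma card_leaf a l t :
  #|[set k : 'I_(2*a+l+4*t).+1 | (2*a < k) && (k < (2*a+l).+1)]| = l.
Proof.
rewrite card_sumS (eq_bigr (fun k : 'I_(2*a+l+4*t).+1 => (leafb a l k : nat))); last first.
  by move=> k _; rewrite inE.
rewrite -(big_mkord xpredT (fun k => (leafb a l k : nat))).
rewrite (@big_cat_nat _ _ _ (2*a).+1) //=; last by lia.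
rewrite (@big_cat_nat _ _ _ (2*a+l).+1 (2*a).+1) //=; [|lia|lia].
rewrite (@eq_big_nat _ _ _ 0 (2*a).+1 _ (fun _ => 0)); last by move=> k Hk; rewrite /leafb; lia.
rewrite (@eq_big_nat _ _ _ (2*a).+1 (2*a+l).+1 _ (fun _ => 1)); last by move=> k Hk; rewrite /leafb; lia.
rewrite (@eq_big_nat _ _ _ (2*a+l).+1 (2*a+l+4*t).+1 _ (fun _ => 0)); last by move=> k Hk; rewrite /leafb; lia.
rewrite !sum_nat_const_nat. lia.
Qed.

Theorem mainTheorem4 :
  forall n l : nat, (l <= 8)%N ->
  exists (N : nat) (e : rel 'I_N),
    simple_graph e /\ outerplanar e /\ (n < N)%N /\ #|V1 e| = l /\
    rho4 e = (3%:Z - (sigma4 e)%:Z)%R /\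
    ~ (exists c : 'I_N -> 'I_4, equitable_4coloring e c).
Proof.
move=> n l Hl.
pose a := (8 - l)./2.
have Ha : (2*a+l = 8 - l %% 2)%N.
  rewrite /a; clear a; move: Hl; case: l => [|[|[|[|[|[|[|[|[|l]]]]]]]]] //.
have H7 : (7 <= 2*a+l)%N by rewrite Ha; case: (l %% 2) (ltn_pmod l (isT : 0 < 2)%N) => [|[|]].
exists (2*a+l+4*n.+1).+1, (GG a l n.+1).
have HV : #|V1 (GG a l n.+1)| = l by rewrite V1_GG ?card_leaf //; lia.
split; first exact: GG_simple.
split; first exact: GG_outer.
split; first by lia.
split; first exact: HV.
split; last exact: no_eq.
have Hs : (Posz (2*a+l) - 5 = 3%:Z - (sigma4 (GG a l n.+1))%:Z)%R.
  rewrite /sigma4 HV Ha; case: (l %% 2) (ltn_pmod l (isT : 0 < 2)%N) => [|[|]] //.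
apply/eqP; rewrite eq_le; apply/andP; split.
- rewrite /rho4 -Hs; apply: bigmax_le; first by lia.
  by move=> A _; apply: rho_le; lia.
- rewrite /rho4 -Hs -(rho_T n.+1); last by lia.
  exact: le_bigmax.
Qed.
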